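(* Let $(X,d)$ be a metric space and $\mu$ a non-atomic Borel measure on $X$. For every path $\gamma:[a,b]\to X$ in $\Gamma^\mu$, the function $\nu_\gamma$ is strictly increasing, continuous, maps $[a,b]$ onto $[0,h(\gamma)]$, and for every $x\in[a,b]$, $h(\gamma)=h(\gamma|_{[a,x]})+h(\gamma|_{[x,b]})$.
   Context: A path is a continuous map $\gamma:[a,b]\to X$; a subpath is a restriction to a subinterval, trivial if that interval is a point; $\mathrm{Im}(\gamma)=\gamma([a,b])$. $\mu$ non-atomic: $\mu(\{x\})=0$ for all $x$. $\Gamma^\mu$ is the set of all non-trivial injective paths $\gamma$ with $0<\mu(\mathrm{Im}(\tilde\gamma))<\infty$ for every non-trivial subpath $\tilde\gamma$. For any path $\eta$ (including subpaths), $h(\eta)=\mu(\mathrm{Im}(\eta))$; for $\gamma:[a,b]\to X$ in $\Gamma^\mu$, $\nu_\gamma:[a,b]\to\mathbb R$, $\nu_\gamma(x)=h(\gamma|_{[a,x]})$. *)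

(* Defs.v *)
From HB Require Import structures.
From mathcomp Require Import all_boot all_order all_algebra.
From mathcomp Require Import all_classical all_reals all_analysis.
Set Implicit Arguments. Unset Strict Implicit. Unset Printing Implicit Defensive.
Import Order.TTheory GRing.Theory Num.Theory.
Import numFieldNormedType.Exports.
Local Open Scope classical_set_scope.
Local Open Scope ring_scope.

(* Metric spaces with a distinguished point (required by MathComp-Analysis'
   measurable structures; harmless here since X contains the image of a path). *)
#[short(type="pointedMetricType")]
HB.structure Definition PointedMetric (K : numDomainType) :=
  {T of Pointed T & Metric K T}.

Notation borel_space X := (g_sigma_algebraType (@open X)).

Section paths.
Context {R : realType} {X : pointedMetricType R}.
Variable mu : set (borel_space X) -> \bar R.

Definition path_im (gamma : R -> X) (c d : R) : set X := gamma @` `[c, d].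

Definition hmu (gamma : R -> X) (c d : R) : \bar R := mu (path_im gamma c d).

Definition non_atomic : Prop := forall x : X, mu [set x] = 0%E.

Definition in_Gamma (a b : R) (gamma : R -> X) : Prop :=
  [/\ a < b,
      {within `[a, b], continuous gamma},
      {in `[a, b] &, injective gamma} &
      forall c d, a <= c -> c < d -> d <= b ->
        (0 < hmu gamma c d < +oo)%E].

(* nu_gamma(x) = h(gamma|_[a,x]), as a real number (it is finite). *)
Definition nu (a : R) (gamma : R -> X) (x : R) : R := fine (hmu gamma a x).

End paths.

(* Main.v *)
Require Import Defs.
From HB Require Import structures.
From mathcomp Require Import all_boot all_order all_algebra.
From mathcomp Require Import all_classical all_reals all_analysis.
From mathcomp Require Import lra.
Import Order.TTheory GRing.Theory Num.Theory.
Import numFieldNormedType.Exports.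
Local Open Scope classical_set_scope.
Local Open Scope ring_scope.

Lemma itvcc (R : realType) (c d t : R) : `[c,d]%classic t = (c <= t <= d).
Proof. by rewrite /= in_itv. Qed.

Section S.
Context (R : realType) (X : pointedMetricType R)
  (mu : {measure set (borel_space X) -> \bar R}) (a b : R) (gamma : R -> X).

Lemma closed_meas (A : set X) : closed A -> measurable (A : set (borel_space X)).
Proof.
move=> cA.
rewrite -(setCK A).
apply: measurableC.
apply: sub_sigma_algebra.
by rewrite openC.
Qed.

Hypothesis cg : {within `[a, b], continuous gamma}.
Hypothesis ig : {in `[a, b] &, injective gamma}.
Hypothesis na : non_atomic mu.

Lemma im_meas c d : a <= c -> d <= b ->
  measurable (path_im gamma c d : set (borel_space X)).
Proof.
move=> ac db; apply: closed_meas.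
apply: compact_closed; first exact: metric_hausdorff.
apply: continuous_compact; last exact: segment_compact.
apply: continuous_subspaceW cg.
by move=> t /=; rewrite !in_itv/= => /andP[ct td]; rewrite (le_trans ac ct) (le_trans td db).
Qed.

Lemma im_pt x : path_im gamma x x = [set gamma x].
Proof.
apply/seteqP; split => y /=.
  by move=> [t]; rewrite itvcc -eq_le => /eqP -> <-.
by move=> ->; exists x => //; rewrite itvcc lexx.
Qed.

Lemma hmu_add c x d : a <= c -> c <= x -> x <= d -> d <= b ->
  hmu mu gamma c d = (hmu mu gamma c x + hmu mu gamma x d)%E.
Proof.
move=> ac cx xd db.
have ax : a <= x by apply: le_trans cx.
have xb : x <= b by apply: le_trans db.
set A := path_im gamma c x; set B := path_im gamma x d.
set B' := B `\` [set gamma x].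
have mA : measurable (A : set (borel_space X)) by exact: im_meas.
have mB : measurable (B : set (borel_space X)) by exact: im_meas.
have mx : measurable ([set gamma x] : set (borel_space X)).
  by rewrite -im_pt; exact: im_meas.
have mB' : measurable (B' : set (borel_space X)) by exact: measurableD.
have E1 : path_im gamma c d = A `|` B'.
  apply/seteqP; split => y.
    move=> [t]; rewrite itvcc => /andP[ct td] <-.
    have [tx|xt] := leP t x.
      by left; exists t => //; rewrite itvcc ct tx.
    have [->|ne] := eqVneq (gamma t) (gamma x).
      by left; exists x => //; rewrite itvcc cx lexx.
    by right; split; [exists t => //; rewrite itvcc (ltW xt) td|move=> /eqP; rewrite (negPf ne)].
  move=> [[t]|[[t]]]; rewrite itvcc => /andP[h1 h2] <-.
    by exists t => //; rewrite itvcc h1 (le_trans h2 xd).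
  by move=> _; exists t => //; rewrite itvcc h2 (le_trans cx h1).
have E2 : B = B' `|` [set gamma x].
  apply/seteqP; split => y.
    move=> By; have [->|ne] := eqVneq y (gamma x); first by right.
    by left; split => // /eqP; rewrite (negPf ne).
  move=> [[]//|/= ->]; exists x => //; by rewrite itvcc lexx xd.
have D : A `&` B' = set0.
  rewrite -subset0 => z [[t]]; rewrite itvcc => /andP[ct tx] <-.
  move=> [[s]]; rewrite itvcc => /andP[xs sd] gs; apply.
  have ts : t = s.
    apply: ig; last by [].
      by rewrite in_itv/= (le_trans ac ct) (le_trans tx xb).
    by rewrite in_itv/= (le_trans ax xs) (le_trans sd db).
  by have -> : t = x by apply/eqP; rewrite eq_le tx ts xs.
rewrite /hmu E1 measureU//.
rewrite -/A -/B E2 measureU0//.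
Qed.

Definition Fs (x : R) (n : nat) := path_im gamma (Num.max a (x - n.+1%:R^-1)) (Num.min b (x + n.+1%:R^-1)).

Lemma Fs_meas (x : R) n : measurable (Fs x n : set (borel_space X)).
Proof. by apply: im_meas; rewrite ?le_max ?ge_min lexx. Qed.

Lemma Fs_in (x : R) n t : `[Num.max a (x - n.+1%:R^-1), Num.min b (x + n.+1%:R^-1)]%classic t ->
  t \in `[a, b] /\ `|x - t| <= n.+1%:R^-1.
Proof.
rewrite itvcc ge_max le_min => /andP[/andP[hat xt] /andP[tb tx]].
split; first by rewrite in_itv/= hat tb.
set dd := n.+1%:R^-1 in xt tx *; rewrite ler_norml; apply/andP; split; lra.
Qed.

Lemma Fs_cap (x : R) : x \in `[a, b] -> \bigcap_n Fs x n = [set gamma x].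
Proof.
rewrite in_itv/= => /andP[ax xb].
apply/seteqP; split => z; last first.
  move=> /= -> n _; exists x => //; rewrite itvcc ge_max le_min ax xb /=.
  set dd := n.+1%:R^-1; have : 0 <= dd by rewrite invr_ge0. lra.
move=> Hz /=.
have Hc := (subspace_continuousP _ _).1 cg x.
have xab : `[a, b]%classic x by rewrite itvcc ax xb.
apply: mdist_positivity; apply/eqP; rewrite eq_le mdist_ge0 andbT.
apply/ler_addgt0Pl => e e0; rewrite addr0.
have := Hc xab (ball (gamma x) e) (nbhsx_ballx _ _ e0).
move=> H; have {H} : nbhs x (fun t => `[a,b]%classic t -> ball (gamma x) e (gamma t)) := H.
rewrite nbhs_ballP => -[r r0 Hr].
have [N _ HN] := near_infty_natSinv_lt (PosNum r0).
have := Hz N I; move=> [t Ht <-].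
have [tab dt] := Fs_in _ _ _ Ht.
have : ball (gamma x) e (gamma t).
  apply: (Hr t); last exact: tab.
  rewrite -ball_normE /=.
  by apply: le_lt_trans dt (HN N (leqnn N)).
by rewrite ballEmdist /= metric_sym => /ltW.
Qed.

Hypothesis fin : (hmu mu gamma a b < +oo)%E.

Lemma Fs_small (x : R) eps : x \in `[a, b] -> 0 < eps ->
  exists n, (mu (Fs x n) < eps%:E)%E.
Proof.
move=> xab e0.
have cv := @nonincreasing_cvg_mu _ _ _ mu (Fs x).
have := cv _ (Fs_meas x); rewrite Fs_cap // na => {}cv.
have {}cv : (mu \o Fs x @ \oo --> 0%E)%E.
  apply: cv.
- apply: le_lt_trans fin; apply: le_measure; rewrite ?inE; try exact: Fs_meas; first exact: im_meas.
  by move=> _ [t /(Fs_in _ _ _) [tab _] <-]; exists t => //; move: tab; rewrite in_itv/= itvcc.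
- by rewrite -im_pt; apply: im_meas; move: xab; rewrite in_itv/= => /andP[].
- move=> n m nm; rewrite subsetEset => _ [t Ht <-]; exists t => //; move: Ht.
  have : m.+1%:R^-1 <= n.+1%:R^-1 :> R.
    by rewrite lef_pV2 ?posrE ?ltr0Sn // ler_nat ltnS.
  set dm := m.+1%:R^-1; set dn := n.+1%:R^-1 => dmn.
  rewrite !itvcc !ge_max !le_min => /andP[/andP[h1 h2] /andP[h3 h4]].
  by rewrite h1 h3 /=; apply/andP; split; lra.
move/fine_cvgP: cv => [Hf Hc].
have H2 : \forall n \near \oo, fine (mu (Fs x n)) < eps.
  exact: (cvgr_lt _ Hc _ e0).
have [N _ HN] := filterI Hf H2.
have [/= HN1 HN2] := HN N (leqnn N).
exists N; by rewrite -(fineK HN1) lte_fin.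
Qed.

Hypothesis sub : forall c d, a <= c -> c < d -> d <= b ->
  (0 < hmu mu gamma c d < +oo)%E.

Lemma hmu_fin c d : a <= c -> c <= d -> d <= b -> hmu mu gamma c d \is a fin_num.
Proof.
move=> ac cd db; rewrite le_eqVlt in cd; case/orP: cd => [/eqP <-|cd].
  by rewrite /hmu im_pt na.
have /andP[h1 h2] := sub _ _ ac cd db.
by rewrite ge0_fin_numE // ltW.
Qed.

Lemma nu_diff x y : a <= x -> x <= y -> y <= b ->
  nu mu a gamma y = nu mu a gamma x + fine (hmu mu gamma x y).
Proof.
move=> ax xy yb.
have xb : x <= b by apply: le_trans yb.
rewrite /nu (hmu_add a x y) ?lexx // fineD // ?inE.
  by apply: hmu_fin => //; rewrite lexx.
by apply: hmu_fin => //; apply: le_trans xy.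
Qed.

Lemma hmu_le c d c' d' : a <= c' -> c' <= c -> c <= d -> d <= d' -> d' <= b ->
  (hmu mu gamma c d <= hmu mu gamma c' d')%E.
Proof.
move=> ac' c'c cd dd' d'b.
apply: le_measure; rewrite ?inE.
- by apply: im_meas; [apply: le_trans c'c|apply: le_trans d'b].
- exact: im_meas.
move=> _ [t Ht <-]; exists t => //; move: Ht; rewrite !itvcc => /andP[h1 h2].
by rewrite (le_trans c'c h1) (le_trans h2 dd').
Qed.


Lemma nu_cont : {within `[a, b], continuous (nu mu a gamma)}.
Proof.
apply/subspace_continuousP => x; rewrite itvcc => /andP[ax xb].
have xab : x \in `[a, b] by rewrite in_itv/= ax xb.
apply/cvgrPdist_lt => e e0.
have [N HN] := Fs_small x e xab e0.
set l := Num.max a (x - N.+1%:R^-1) in HN *.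
set r := Num.min b (x + N.+1%:R^-1) in HN *.
have dpos : 0 < N.+1%:R^-1 :> R by rewrite invr_gt0 ltr0Sn.
have al : a <= l by rewrite le_max lexx.
have rb : r <= b by rewrite ge_min lexx.
have lx : l <= x by rewrite ge_max ax /= lerBlDr lerDl ltW.
have xr : x <= r by rewrite le_min xb /= lerDl ltW.
have Hlr : fine (hmu mu gamma l r) < e.
  rewrite -lte_fin fineK //; apply: hmu_fin => //; exact: le_trans xr.
rewrite near_withinE; near=> t => tab.
have : `|x - t| < N.+1%:R^-1.
  near: t; apply/nbhs_ballP; exists N.+1%:R^-1 => // t.
move: tab; rewrite itvcc => /andP[at' tb] hxt.
have lt : l <= t.
  rewrite ge_max at' /=; move: hxt; rewrite ltr_norml => /andP[h1 h2].
  set dd := N.+1%:R^-1 in h1 h2 *; lra.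
have tr : t <= r.
  rewrite le_min tb /=; move: hxt; rewrite ltr_norml => /andP[h1 h2].
  set dd := N.+1%:R^-1 in h1 h2 *; lra.
have [tx|xt] := leP t x.
  rewrite /from_subspace (nu_diff t x at' tx xb) addrAC subrr add0r ger0_norm; last first.
    by apply: fine_ge0; exact: measure_ge0.
  apply: le_lt_trans Hlr; apply: fine_le; rewrite ?inE.
  - exact: hmu_fin.
  - by apply: hmu_fin => //; exact: le_trans xr.
  - exact: hmu_le.
rewrite /from_subspace (nu_diff x t ax (ltW xt) tb) opprD addrA subrr add0r normrN ger0_norm; last first.
  by apply: fine_ge0; exact: measure_ge0.
apply: le_lt_trans Hlr; apply: fine_le; rewrite ?inE.
- by apply: hmu_fin => //; exact: ltW.
- by apply: hmu_fin => //; exact: le_trans xr.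
- by apply: hmu_le => //; exact: ltW.
Unshelve. all: by end_near.
Qed.

End S.

Theorem lemma2p1 (R : realType) (X : pointedMetricType R)
  (mu : {measure set (borel_space X) -> \bar R})
  (a b : R) (gamma : R -> X) :
  non_atomic mu ->
  in_Gamma mu a b gamma ->
  [/\ {in `[a, b] &, forall x y, x < y -> nu mu a gamma x < nu mu a gamma y},
      {within `[a, b], continuous (nu mu a gamma)},
      (nu mu a gamma) @` `[a, b] = `[0, fine (hmu mu gamma a b)]%classic &
      forall x, x \in `[a, b] ->
        hmu mu gamma a b = (hmu mu gamma a x + hmu mu gamma x b)%E].
Proof.
move=> na [ab cg ig sub].
have fin : (hmu mu gamma a b < +oo)%E by have /andP[] := sub a b (lexx a) ab (lexx b).
have nuc : {within `[a, b], continuous (nu mu a gamma)} by apply: nu_cont.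
have nua : nu mu a gamma a = 0 by rewrite /nu /hmu im_pt na.
have nuge0 t : 0 <= nu mu a gamma t by apply: fine_ge0; exact: measure_ge0.
have nub t : a <= t -> t <= b -> nu mu a gamma t <= fine (hmu mu gamma a b).
  move=> at' tb; rewrite -[X in _ <= X]/(nu mu a gamma b).
  rewrite (@nu_diff _ _ _ _ _ _ cg ig na sub _ _ at' tb (lexx b)) lerDl.
  by apply: fine_ge0; exact: measure_ge0.
split => //.
- move=> x y; rewrite !in_itv/= => /andP[ax xb] /andP[ay yb] xy.
  rewrite (@nu_diff _ _ _ _ _ _ cg ig na sub _ _ ax (ltW xy) yb) ltrDl.
  by apply: fine_gt0; apply: sub => //.
- apply/seteqP; split.
    by move=> y [t]; rewrite itvcc => /andP[at' tb] <-; rewrite itvcc nuge0 nub.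
  move=> v; rewrite itvcc => hv.
  have := @IVT R (nu mu a gamma) a b v (ltW ab) nuc.
  rewrite nua min_l ?max_r ?nuge0 // => /(_ hv) [c cab <-].
  by exists c => //; move: cab; rewrite in_itv/= itvcc.
- move=> x; rewrite in_itv/= => /andP[ax xb].
  by apply: hmu_add => //; rewrite lexx.
Qed.
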